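(* Let $A=C(X)$ be the commutative unital C*-algebra of continuous functions on a compact Hausdorff space $X$. For any finitely generated Hilbert $A$-module $\mathcal H$ and any standard normalized tight frame $\{y_j : j\in\mathbb J\}$ of $\mathcal H$, the sum $\sum_j\langle y_j,y_j\rangle$ (converging weakly, i.e. in the weak* topology of the bidual $A^{**}$) is a continuous function on $X$ taking constant non-negative integer values on closed-open subsets of $X$. This limit does not depend on the choice of the standard normalized tight frame of $\mathcal H$.
   Context: A (left) Hilbert $A$-module is a left $A$-module $\mathcal H$ with an $A$-valued inner product $\langle\cdot,\cdot\rangle$, $A$-linear in the first argument, with $\langle x,y\rangle=\langle y,x\rangle^*$, $\langle x,x\rangle\ge0$ and $=0$ only for $x=0$, complete in $\|x\|=\|\langle x,x\rangle\|^{1/2}$. It is finitely generated if every element is an $A$-linear combination of finitely many fixed elements. A sequence $\{y_j:j\in\mathbb J\}$ ($\mathbb J$ finite or countable) is a normalized tight frame if $\langle x,x\rangle=\sum_j\langle x,y_j\rangle\langle y_j,x\rangle$ for all $x\in\mathcal H$, and standard if this series converges in norm for every $x$. *)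

(* Defs.v *)
From HB Require Import structures.
From mathcomp Require Import all_boot all_order all_algebra.
From mathcomp Require Import complex.
From mathcomp Require Import all_classical all_reals topology.
Set Implicit Arguments. Unset Strict Implicit. Unset Printing Implicit Defensive.
Import Order.TTheory GRing.Theory Num.Theory.
Local Open Scope ring_scope.
Local Open Scope classical_set_scope.
Local Open Scope complex_scope.

Section Defs.
Variables (R : realType) (X : topologicalType).
Notation C := (R[i]).

(* f : X -> C is continuous (the elements of A = C(X) are the continuous f). *)
Definition cont (f : X -> C) : Prop :=
  forall (x : X) (e : C), 0 < e -> \forall y \near x, `|f y - f x| < e.

(* Left Hilbert C(X)-module structure on a Z-module H:
   act a h = a . h (only meaningful for continuous a), ip x y = <x,y> in C(X). *)
Record hilbert_CX_module (H : zmodType) (act : (X -> C) -> H -> H)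
    (ip : H -> H -> X -> C) : Prop := {
  hm_actD : forall a x y, cont a -> act a (x + y) = act a x + act a y;
  hm_actDl : forall a b x, cont a -> cont b ->
    act (fun t => a t + b t) x = act a x + act b x;
  hm_actM : forall a b x, cont a -> cont b ->
    act (fun t => a t * b t) x = act a (act b x);
  hm_act1 : forall x, act (fun _ => 1) x = x;
  hm_ip_cont : forall x y, cont (ip x y);
  hm_ipD : forall x y z t, ip (x + y) z t = ip x z t + ip y z t;
  hm_ipZ : forall a x z t, cont a -> ip (act a x) z t = a t * ip x z t;
  hm_ip_sym : forall x y t, ip x y t = (ip y x t)^*;
  hm_ip_ge0 : forall x t, 0 <= ip x x t;
  hm_ip_def : forall x, (forall t, ip x x t = 0) -> x = 0;
  (* completeness for the norm ||x|| = sup_t |<x,x>(t)|^(1/2) *)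
  hm_complete : forall u : nat -> H,
    (forall e : C, 0 < e -> exists N, forall m n, (N <= m)%N -> (N <= n)%N ->
       forall t, `|ip (u m - u n) (u m - u n) t| < e) ->
    exists l : H, forall e : C, 0 < e -> exists N, forall n, (N <= n)%N ->
       forall t, `|ip (u n - l) (u n - l) t| < e
}.

Definition fin_generated (H : zmodType) (act : (X -> C) -> H -> H) : Prop :=
  exists (n : nat) (g : 'I_n -> H), forall x : H,
    exists a : 'I_n -> X -> C, (forall i, cont (a i)) /\
      x = \sum_(i < n) act (a i) (g i).

(* standard normalized tight frame indexed by nat (a finite frame is padded
   with zeros): for every x, sum_j <x,y_j><y_j,x> converges in the norm of
   C(X) (sup norm) to <x,x>. *)
Definition std_nt_frame (H : zmodType) (ip : H -> H -> X -> C)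
    (y : nat -> H) : Prop :=
  forall x : H, forall e : C, 0 < e -> exists N, forall n, (N <= n)%N ->
    forall t, `|ip x x t - \sum_(j < n) ip x (y j) t * ip (y j) x t| < e.

Definition bdd_lin_functional (phi : (X -> C) -> C) : Prop :=
  (forall a f g, cont f -> cont g ->
     phi (fun t => a * f t + g t) = a * phi f + phi g) /\
  exists K : C, forall f, cont f -> forall M : C,
     (forall t, `|f t| <= M) -> `|phi f| <= K * M.

(* the series sum_j s_j (s_j in A) converges weakly [weak-star in the bidual of A] to f *)
Definition weak_sum_to (s : nat -> X -> C) (f : X -> C) : Prop :=
  forall phi, bdd_lin_functional phi ->
    forall e : C, 0 < e -> exists N, forall n, (N <= n)%N ->
      `|phi (fun t => \sum_(j < n) s j t) - phi f| < e.

End Defs.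

(* Main.v *)
Require Import Defs.
From HB Require Import structures.
From mathcomp Require Import all_boot all_order all_algebra.
From mathcomp Require Import complex.
From mathcomp Require Import all_classical all_reals topology.
From mathcomp Require Import ring lra.
Import Order.TTheory GRing.Theory Num.Theory.
Local Open Scope ring_scope.
Local Open Scope classical_set_scope.
Set Implicit Arguments. Unset Strict Implicit. Unset Printing Implicit Defensive.

Section Basic.
Variables (R : realType) (X : topologicalType).
Local Notation C := (R[i]).
Variables (H : zmodType) (act : (X -> C) -> H -> H) (ip : H -> H -> X -> C).
Hypothesis HH : hilbert_CX_module act ip.

Lemma cont_cst (c : C) : cont (fun _ : X => c).
Proof. by move=> x e e0; near=> y; rewrite subrr normr0. Unshelve. all: by end_near. Qed.

Definition sc (c : C) (x : H) := act (fun _ => c) x.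

Lemma scDr c x y : sc c (x + y) = sc c x + sc c y.
Proof. by rewrite /sc (hm_actD HH _ _ (cont_cst c)). Qed.

Lemma scDl c d x : sc (c + d) x = sc c x + sc d x.
Proof. by rewrite /sc -(hm_actDl HH _ (cont_cst c) (cont_cst d)). Qed.

Lemma sc0 x : sc 0 x = 0.
Proof. by apply: (addrI (sc 0 x)); rewrite -scDl !addr0. Qed.

Lemma sc1 x : sc 1 x = x.
Proof. by rewrite /sc (hm_act1 HH x). Qed.

Lemma scM c d x : sc (c * d) x = sc c (sc d x).
Proof. by rewrite /sc -(hm_actM HH _ (cont_cst c) (cont_cst d)). Qed.

Lemma ipDl x y z t : ip (x + y) z t = ip x z t + ip y z t.
Proof. by rewrite (hm_ipD HH). Qed.

Lemma ip_sym x y t : ip x y t = (ip y x t)^*.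
Proof. by rewrite {1}(hm_ip_sym HH). Qed.

Lemma ipDr x y z t : ip z (x + y) t = ip z x t + ip z y t.
Proof. by rewrite ip_sym ipDl rmorphD /= -!ip_sym. Qed.

Lemma ip0l z t : ip 0 z t = 0.
Proof. by apply: (addrI (ip 0 z t)); rewrite -ipDl !addr0. Qed.

Lemma ip0r z t : ip z 0 t = 0.
Proof. by rewrite ip_sym ip0l conjC0. Qed.

Lemma ipNl x z t : ip (- x) z t = - ip x z t.
Proof. by apply/eqP; rewrite -subr_eq0 opprK -ipDl addNr ip0l. Qed.

Lemma ipNr x z t : ip z (- x) t = - ip z x t.
Proof. by rewrite ip_sym ipNl rmorphN /= -ip_sym. Qed.

Lemma ipBl x y z t : ip (x - y) z t = ip x z t - ip y z t.
Proof. by rewrite ipDl ipNl. Qed.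

Lemma ipBr x y z t : ip z (x - y) t = ip z x t - ip z y t.
Proof. by rewrite ipDr ipNr. Qed.

Lemma ipZl c x z t : ip (sc c x) z t = c * ip x z t.
Proof. by rewrite /sc (hm_ipZ HH _ _ _ (cont_cst c)). Qed.

Lemma ipZr c x z t : ip z (sc c x) t = c^* * ip z x t.
Proof. by rewrite ip_sym ipZl rmorphM /= -ip_sym. Qed.

Lemma ipAl a x z t : cont a -> ip (act a x) z t = a t * ip x z t.
Proof. by move=> ca; rewrite (hm_ipZ HH _ _ _ ca). Qed.

Lemma ipAr a x z t : cont a -> ip z (act a x) t = (a t)^* * ip z x t.
Proof. by move=> ca; rewrite ip_sym ipAl // rmorphM /= -ip_sym. Qed.

Lemma ip_suml I (r : seq I) (P : pred I) (F : I -> H) z t :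
  ip (\sum_(i <- r | P i) F i) z t = \sum_(i <- r | P i) ip (F i) z t.
Proof.
elim/big_rec2: _ => [|i y1 y2 _ <-]; first by rewrite ip0l.
by rewrite ipDl.
Qed.

Lemma ip_sumr I (r : seq I) (P : pred I) (F : I -> H) z t :
  ip z (\sum_(i <- r | P i) F i) t = \sum_(i <- r | P i) ip z (F i) t.
Proof.
elim/big_rec2: _ => [|i y1 y2 _ <-]; first by rewrite ip0r.
by rewrite ipDr.
Qed.

Lemma ip_ge0 x t : 0 <= ip x x t.
Proof. by have := hm_ip_ge0 HH x t. Qed.

Lemma ip_real x t : (ip x x t)^* = ip x x t.
Proof. exact/geC0_conj/ip_ge0. Qed.

Lemma ipJ x y t : ip x y t * ip y x t = `|ip x y t| ^+ 2.
Proof. by rewrite normCK -ip_sym. Qed.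

Lemma ip_expand x y (l : C) t :
  ip (x - sc l y) (x - sc l y) t =
  ip x x t - l^* * ip x y t - l * (ip x y t)^* + l * l^* * ip y y t.
Proof.
rewrite ipBl !ipBr ipZl !ipZr ipZl -(ip_sym y x).
by rewrite mulrA; ring.
Qed.

Lemma CS x y t : `|ip x y t| ^+ 2 <= ip x x t * ip y y t.
Proof.
set a := ip x x t; set b := ip x y t; set c := ip y y t.
have a0 : 0 <= a by apply: ip_ge0.
have c0 : 0 <= c by apply: ip_ge0.
have nb : `|b| ^+ 2 = b * b^* by rewrite normCK.
have nb0 : 0 <= `|b| ^+ 2 by rewrite exprn_ge0.
have [c_eq0|c_neq0] := eqVneq c 0.
  rewrite c_eq0 mulr0.
  have [b_eq0|b_neq0] := eqVneq (`|b| ^+ 2) 0; first by rewrite b_eq0.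
  have bp : 0 < `|b| ^+ 2 by rewrite lt0r b_neq0.
  pose l := ((a + 1) / `|b| ^+ 2) * b.
  have := ip_ge0 (x - sc l y) t; rewrite ip_expand -/a -/b -/c c_eq0 mulr0 addr0.
  have lR : ((a + 1) / `|b| ^+ 2)^* = (a + 1) / `|b| ^+ 2.
    by apply: geC0_conj; rewrite divr_ge0 // addr_ge0.
  rewrite /l rmorphM /= lR.
  have E : forall s, a - s * b^* * b - s * b * b^* = a - 2 * s * `|b| ^+ 2.
    by move=> s; rewrite nb; ring.
  rewrite E -mulrA divfK // => h; exfalso.
  have : 0 < a + 2 by rewrite ltr_wpDl // ltr0n.
  rewrite -oppr_lt0 (_ : - (a + 2) = a - 2 * (a + 1)); last by ring.
  by move/lt_geF; rewrite h.
have cp : 0 < c by rewrite lt0r c_neq0.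
have cR : c^* = c by apply: geC0_conj.
pose l := b / c.
have := ip_ge0 (x - sc l y) t; rewrite ip_expand -/a -/b -/c.
rewrite /l rmorphM /= rmorphV ?unitfE // /= cR.
have -> : a - b^* / c * b - b / c * b^* + b / c * (b^* / c) * c = a - (b * b^*) / c.
  by field.
by rewrite -nb subr_ge0 ler_pdivrMr // mulrC.

Qed.

End Basic.

Section Fiber.
Variables (R : realType) (X : topologicalType).
Local Notation C := (R[i]).
Variables (H : zmodType) (act : (X -> C) -> H -> H) (ip : H -> H -> X -> C).
Hypothesis HH : hilbert_CX_module act ip.
Local Notation sc := (@sc R X H act).

Lemma ip_eq0 x y t : ip x x t = 0 -> ip x y t = 0.
Proof.
move=> h; have := CS HH x y t; rewrite h mul0r.
by move=> h0; apply/eqP; rewrite -normr_eq0 -sqrf_eq0 eq_le h0 exprn_ge0 ?normr_ge0.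
Qed.

Lemma ip_eq0r x y t : ip x x t = 0 -> ip y x t = 0.
Proof. by move=> h; rewrite (ip_sym HH) (ip_eq0 _ h) conjC0. Qed.

Lemma sum_kron (F : nat -> C) d b : (b < d)%N ->
  \sum_(a < d) F a * (a == b :> nat)%:R = F b.
Proof.
move=> hb; rewrite (bigD1 (Ordinal hb)) //= eqxx mulr1 big1 ?addr0 //.
move=> a ne; suff -> : (a == b :> nat) = false by rewrite mulr0.
by apply/negbTE; apply: contra ne => /eqP h; apply/eqP/val_inj.
Qed.

Definition ON t d (u : nat -> H) :=
  forall a b, (a < d)%N -> (b < d)%N -> ip (u a) (u b) t = (a == b)%:R.

Definition perp t d (u : nat -> H) w := forall a, (a < d)%N -> ip w (u a) t = 0.

Definition proj t d (u : nat -> H) x := \sum_(a < d) sc (ip x (u a) t) (u a).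

Lemma ip_proj_r t d u w x : perp t d u w -> ip w (proj t d u x) t = 0.
Proof.
move=> p; rewrite /proj (ip_sumr HH) big1 // => a _.
by rewrite (ipZr HH) p // mulr0.
Qed.

Lemma resid_perp t d u x : ON t d u -> perp t d u (x - proj t d u x).
Proof.
move=> on b hb; rewrite (ipBl HH) /proj (ip_suml HH).
under eq_bigr => a _ do rewrite (ipZl HH) on //.
by rewrite (sum_kron (fun a => ip x (u a) t)) // subrr.
Qed.

Lemma proj_ip t d u x : ip (proj t d u x) x t = \sum_(a < d) ip x (u a) t * ip (u a) x t.
Proof. by rewrite /proj (ip_suml HH); apply: eq_bigr => a _; rewrite (ipZl HH). Qed.

Definition complete t d (u : nat -> H) := forall w, perp t d u w -> ip w w t = 0.

Lemma parseval t d u x : ON t d u -> complete t d u ->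
  ip x x t = \sum_(a < d) ip x (u a) t * ip (u a) x t.
Proof.
move=> on cp; have r0 := cp _ (resid_perp x on).
have := ip_eq0 x r0; rewrite (ipBl HH) => /eqP; rewrite subr_eq0 => /eqP ->.
by rewrite proj_ip.
Qed.

Lemma resid0 t d u x : ON t d u -> complete t d u ->
  ip (x - proj t d u x) (x - proj t d u x) t = 0.
Proof. by move=> on cp; apply: cp; apply: resid_perp. Qed.

Variables (n : nat) (g : 'I_n -> H).
Hypothesis rep : forall x, exists a : 'I_n -> X -> C, (forall i, cont (a i)) /\
      x = \sum_(i < n) act (a i) (g i).

Lemma span0 w t : (forall k, ip w (g k) t = 0) -> ip w w t = 0.
Proof.
move=> h; have [a [ca ew]] := rep w.
rewrite {2}ew (ip_sumr HH) big1 // => k _.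
by rewrite (ipAr HH) // h mulr0.
Qed.

Lemma GS t m : (m <= n)%N -> exists d u, ON t d u /\
  forall w, perp t d u w -> forall k : 'I_n, (k < m)%N -> ip w (g k) t = 0.
Proof.
elim: m => [_|m IH hm].
  by exists 0%N, (fun _ => 0); split => // a b.
have [d [u [on inv]]] := IH (ltnW hm).
pose gm := g (Ordinal hm).
pose r := gm - proj t d u gm.
have rp : perp t d u r by apply: resid_perp.
have wr : forall w, perp t d u w -> ip w gm t = ip w r t.
  by move=> w p; rewrite (ipBr HH) ip_proj_r // subr0.
have [r0|rn0] := eqVneq (ip r r t) 0.
  exists d, u; split => // w p k; rewrite ltnS leq_eqVlt => /orP [/eqP ek|lk].
    have -> : k = Ordinal hm by apply: val_inj.
    by rewrite wr // ip_eq0r.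
  exact: inv.
pose v := ip r r t.
have v0 : 0 < v by rewrite lt0r rn0 (ip_ge0 HH).
pose s := (sqrtC v)^-1.
have sq0 : 0 < sqrtC v by rewrite sqrtC_gt0.
have s0 : s != 0 by rewrite invr_eq0 gt_eqF.
have sR : s^* = s by apply: geC0_conj; rewrite invr_ge0 ltW.
pose u' := fun a => if a == d then sc s r else u a.
exists d.+1, u'; split.
  move=> a b; rewrite !ltnS => ha hb.
  have [ea|na] := eqVneq a d; have [eb|nb] := eqVneq b d.
  - rewrite /u' ea eb eqxx (ipZl HH) (ipZr HH) sR.
    rewrite mulrA -expr2 exprVn sqrtCK mulVf //; exact: rn0.
  - have {}hb : (b < d)%N by rewrite ltn_neqAle nb hb.
    rewrite /u' ea eqxx (ltn_eqF hb) (ipZl HH) rp // mulr0.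
    by rewrite eq_sym (ltn_eqF hb).
  - have {}ha : (a < d)%N by rewrite ltn_neqAle na ha.
    rewrite /u' eb eqxx (ltn_eqF ha) (ipZr HH) (ip_sym HH) rp // conjC0 mulr0.
    by [].
  - have {}ha : (a < d)%N by rewrite ltn_neqAle na ha.
    have {}hb : (b < d)%N by rewrite ltn_neqAle nb hb.
    by rewrite /u' (ltn_eqF ha) (ltn_eqF hb) on.
move=> w p k; rewrite ltnS leq_eqVlt => /orP [/eqP ek|lk].
  have -> : k = Ordinal hm by apply: val_inj.
  have pw : perp t d u w.
    by move=> a ha; have := p a (ltnW ha); rewrite /u' ltn_eqF.
  rewrite wr //; have := p d (ltnSn d); rewrite /u' eqxx (ipZr HH) sR.
  by move/eqP; rewrite mulf_eq0 (negbTE s0) /= => /eqP.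
apply: inv => // a ha; have := p a (ltnW ha); by rewrite /u' ltn_eqF.
Qed.

Lemma basis t : exists du : nat * (nat -> H), ON t du.1 du.2 /\ complete t du.1 du.2.
Proof.
have [d [u [on inv]]] := GS t (leqnn n).
exists (d, u); split => // w p; apply: span0 => k; exact: inv.
Qed.

End Fiber.

Section CR.
Variable R : realType.
Local Notation C := (R[i]).

Lemma normCR (r : R) : `|r%:C%C| = `|r|%:C%C.
Proof. by rewrite normc_def /= expr0n /= addr0 sqrtr_sqr. Qed.

Lemma ReB (a b : C) : complex.Re (a - b) = complex.Re a - complex.Re b.
Proof. by case: a; case: b. Qed.

Lemma ReD (a b : C) : complex.Re (a + b) = complex.Re a + complex.Re b.
Proof. by case: a; case: b. Qed.

Lemma ge0_ReC (z : C) : 0 <= z -> (complex.Re z)%:C%C = z /\ 0 <= complex.Re z.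
Proof. by case: z => a b; rewrite lecE /= => /andP [/eqP -> h]. Qed.

Lemma gt0_ReC (z : C) : 0 < z -> (complex.Re z)%:C%C = z /\ 0 < complex.Re z.
Proof. by case: z => a b; rewrite ltcE /= => /andP [/eqP -> h]. Qed.

Lemma RC_le (a b : R) : ((a%:C)%C <= (b%:C)%C) = (a <= b).
Proof. exact: lecR. Qed.

Lemma RC_lt (a b : R) : ((a%:C)%C < (b%:C)%C) = (a < b).
Proof. exact: ltcR. Qed.

Lemma ReC (r : R) : complex.Re (r%:C)%C = r. Proof. by []. Qed.

Lemma RC_add (a b : R) : ((a + b)%:C)%C = (a%:C + b%:C)%C.
Proof. by apply/eqP; rewrite eq_complex /= addr0 !eqxx. Qed.

Lemma RC_sub (a b : R) : ((a%:C)%C - (b%:C)%C) = ((a - b)%:C)%C.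
Proof. by apply/eqP; rewrite eq_complex /= subr0 !eqxx. Qed.

Lemma RC_mul (a b : R) : ((a * b)%:C)%C = (a%:C * b%:C)%C.
Proof. by apply/eqP; rewrite eq_complex /= !mulr0 !mul0r subr0 addr0 !eqxx. Qed.

Lemma RC_sum I (r : seq I) (P : pred I) (F : I -> R) :
  ((\sum_(i <- r | P i) F i)%:C)%C = \sum_(i <- r | P i) ((F i)%:C)%C.
Proof.
elim/big_rec2: _ => [|i y1 y2 _ <-] //.
by rewrite RC_add.
Qed.

Lemma Re_sum I (r : seq I) (P : pred I) (F : I -> C) :
  complex.Re (\sum_(i <- r | P i) F i) = \sum_(i <- r | P i) complex.Re (F i).
Proof.
elim/big_rec2: _ => [|i y1 y2 _ <-] //.
by rewrite ReD.
Qed.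

End CR.

Section Cont.
Variables (R : realType) (X : topologicalType).
Local Notation C := (R[i]).

Definition contR (u : X -> R) := forall x e, 0 < e -> \forall y \near x, `|u y - u x| < e.

Lemma contRC u : contR u -> cont (fun t => (u t)%:C%C).
Proof.
move=> hu x e /gt0_ReC [ee e0]; near=> y.
rewrite -ee -raddfB /= normCR RC_lt; near: y; exact: hu.
Unshelve. all: by end_near. Qed.

Lemma contCRe (f : X -> C) : cont f -> contR (fun t => complex.Re (f t)).
Proof.
move=> hf x e e0; near=> y.
have h : `|f y - f x| < e%:C%C by near: y; apply: hf; rewrite RC_lt.
rewrite -ReB -RC_lt; apply: le_lt_trans h; exact: normc_ge_Re.
Unshelve. all: by end_near. Qed.

Lemma contR_cst (c : R) : contR (fun _ => c).
Proof. by move=> x e e0; near=> y; rewrite subrr normr0. Unshelve. all: by end_near. Qed.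

Lemma contR_D u v : contR u -> contR v -> contR (fun t => u t + v t).
Proof.
move=> hu hv x e e0; have e2 : 0 < e / 2 by rewrite divr_gt0.
near=> y.
have h1 : `|u y - u x| < e / 2 by near: y; exact: hu.
have h2 : `|v y - v x| < e / 2 by near: y; exact: hv.
rewrite (_ : u y + v y - (u x + v x) = (u y - u x) + (v y - v x)); last by ring.
by apply: (le_lt_trans (ler_normD _ _)); rewrite [e]splitr ltrD.
Unshelve. all: by end_near. Qed.

Lemma contR_scale (k : R) u : contR u -> contR (fun t => k * u t).
Proof.
move=> hu x e e0; have k1 : 0 < `|k| + 1 by rewrite ltr_wpDl.
near=> y.
have h1 : `|u y - u x| < e / (`|k| + 1) by near: y; apply: hu; rewrite divr_gt0.
rewrite -mulrBr normrM.
apply: (le_lt_trans (y := (`|k| + 1) * `|u y - u x|)).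
  by rewrite ler_wpM2r // lerDl.
by rewrite mulrC -ltr_pdivlMr.
Unshelve. all: by end_near. Qed.

Lemma contR_norm u : contR u -> contR (fun t => `|u t|).
Proof.
move=> hu x e e0; near=> y.
apply: le_lt_trans (ler_dist_dist _ _) _; near: y; exact: hu.
Unshelve. all: by end_near. Qed.

Lemma contR_B u v : contR u -> contR v -> contR (fun t => u t - v t).
Proof.
move=> hu hv; apply: contR_D => //.
have := contR_scale (-1) hv; congr contR; apply: funext => t; ring.
Qed.

Lemma cont_D (f g : X -> C) : cont f -> cont g -> cont (fun t => f t + g t).
Proof.
move=> hu hv x e e0; have e2 : 0 < e / 2 by rewrite divr_gt0.
near=> y.
have h1 : `|f y - f x| < e / 2 by near: y; exact: hu.
have h2 : `|g y - g x| < e / 2 by near: y; exact: hv.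
rewrite (_ : f y + g y - (f x + g x) = (f y - f x) + (g y - g x)); last by ring.
by apply: (le_lt_trans (ler_normD _ _)); rewrite [e]splitr ltrD.
Unshelve. all: by end_near. Qed.

Lemma cont_sum (I : Type) (r : seq I) (P : pred I) (F : I -> X -> C) :
  (forall i, cont (F i)) -> cont (fun t => \sum_(i <- r | P i) F i t).
Proof.
move=> hF; elim: r => [|i r IH].
  by under eq_fun do rewrite big_nil; exact: cont_cst.
under eq_fun do rewrite big_cons.
case: (P i); last exact: IH.
exact: cont_D.
Qed.

End Cont.

Section Cpt.
Variables (R : realType) (X : topologicalType).
Local Notation C := (R[i]).
Hypothesis cX : compact [set: X].

Lemma bounded_cont (a : X -> C) : cont a -> exists B : R, forall t, `|a t| <= B%:C%C.
Proof.
move=> ca.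
have := (compact_near_coveringP [set: X]).1 cX nat \oo (fun N t => `|a t| < (N%:R : R)%:C%C).
case.
- move=> x _; pose b := complex.Re `|a x|; have [eb b0] := ge0_ReC (normr_ge0 (a x)); rewrite -/b in eb b0.
  exists ([set t | `|a t - a x| < 1], [set N : nat | b + 1 <= N%:R]); first split.
  + by apply: ca; rewrite ltr01.
  + exact: nbhs_infty_ger.
  move=> [t N] [/= h1 h2].
  rewrite (_ : a t = (a t - a x) + a x); last by ring.
  apply: le_lt_trans (ler_normD _ _) _.
  rewrite -eb (_ : (N%:R : R) = (N%:R - b) + b); last by ring.
  rewrite RC_add ltrD2r; apply: lt_le_trans h1 _.
  by rewrite -(rmorph1 (real_complex R)) RC_le lerBrDr addrC.
move=> N _ h; exists N%:R => t; apply: ltW; exact: (h N (leqnn N) t I).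
Qed.

Lemma dini (s : nat -> X -> R) (f : X -> R) :
  (forall n, contR (s n)) -> contR f ->
  (forall n m t, (n <= m)%N -> s n t <= s m t) ->
  (forall n t, s n t <= f t) ->
  (forall t e, 0 < e -> exists N, f t - s N t < e) ->
  forall e, 0 < e -> exists N, forall n, (N <= n)%N -> forall t, `|f t - s n t| < e.
Proof.
move=> cs cf mono le lim e e0.
have e3 : 0 < e / 3 by rewrite divr_gt0.
have := (compact_near_coveringP [set: X]).1 cX nat \oo (fun n t => `|f t - s n t| < e).
case.
- move=> x _; have [N0 hN0] := lim x _ e3.
  exists ([set t | `|f t - f x| < e / 3 /\ `|s N0 t - s N0 x| < e / 3],
          [set n : nat | (N0 <= n)%N]); first split.
  + have h1 : \forall t \near x, `|f t - f x| < e / 3 by exact: cf.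
    have h2 : \forall t \near x, `|s N0 t - s N0 x| < e / 3 by exact: cs.
    by apply: filterS2 h1 h2 => t.
  + exact: nbhs_infty_ge.
  move=> [t n] [/= [h1 h2] h3].
  have a1 := le n t; have a2 := mono _ _ t h3.
  rewrite ger0_norm ?subr_ge0 //.
  move: h1 h2; rewrite !ltr_norml => /andP [h1 h1'] /andP [h2 h2'].
  lra.
move=> N _ h; exists N => n hn t; exact: (h n hn t I).
Qed.

End Cpt.

Section LC.
Variables (R : realType) (X : topologicalType).
Local Notation C := (R[i]).
Variable (f : X -> C).
Hypothesis lc : forall x, \forall t \near x, f t = f x.

Lemma lc_cont : cont f.
Proof.
move=> x e e0; apply: filterS (lc x) => t ->; by rewrite subrr normr0.
Qed.

Lemma lc_open c : open [set t | f t = c].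
Proof.
rewrite openE => x /= fx; rewrite /interior /=.
apply: filterS (lc x) => t ft; by move: fx; rewrite /= ft.
Qed.

Lemma lc_closed c : closed [set t | f t = c].
Proof.
rewrite -openC openE => x /= fx; rewrite /interior /=.
apply: filterS (lc x) => t ft; by move: fx; rewrite /setC /= ft.
Qed.

End LC.

Section Mono.
Variable R : realType.

Lemma sum_mono (u : nat -> R) n m : (forall j, 0 <= u j) -> (n <= m)%N ->
  \sum_(j < n) u j <= \sum_(j < m) u j.
Proof.
move=> u0 nm; rewrite -!(big_mkord xpredT) (big_cat_nat (leq0n n) nm) /=.
by rewrite lerDl sumr_ge0.
Qed.

Lemma mono_leR (u : nat -> R) L : (forall j, 0 <= u j) ->
  (forall e, 0 < e -> exists N, forall n, (N <= n)%N -> `|L - \sum_(j < n) u j| < e) ->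
  forall n, \sum_(j < n) u j <= L.
Proof.
move=> u0 lim n; rewrite leNgt; apply/negP => h.
have [N hN] : exists N, forall n0, (N <= n0)%N -> `|L - \sum_(j < n0) u j| < \sum_(j < n) u j - L by apply: lim; rewrite subr_gt0.
have := hN (maxn N n) (leq_maxl _ _).
have := sum_mono u0 (leq_maxr N n).
rewrite ltr_norml => h1 /andP [h2 h3]; lra.
Qed.

End Mono.

Section Frame.
Variables (R : realType) (X : topologicalType).
Local Notation C := (R[i]).
Variables (H : zmodType) (act : (X -> C) -> H -> H) (ip : H -> H -> X -> C).
Hypothesis HH : hilbert_CX_module act ip.

Lemma frame_sum_eq (y : nat -> H) t d u n : ON ip t d u -> complete ip t d u ->
  \sum_(j < n) ip (y j) (y j) t =
  \sum_(a < d) \sum_(j < n) ip (u a) (y j) t * ip (y j) (u a) t.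
Proof.
move=> on cp.
under eq_bigr => j _ do rewrite (parseval HH (y j) on cp).
rewrite exchange_big /=; apply: eq_bigr => a _; apply: eq_bigr => j _.
by rewrite mulrC.
Qed.

Lemma frame_convC (y : nat -> H) t d u : std_nt_frame ip y -> ON ip t d u -> complete ip t d u ->
  forall e : C, 0 < e -> exists N, forall n, (N <= n)%N ->
   `|d%:R - \sum_(j < n) ip (y j) (y j) t| < e.
Proof.
move=> fr on cp e e0.
have e1 : 0 < e / (d%:R + 1) by rewrite divr_gt0 // ltr_wpDl.
have /choice [Nf hNf] : forall a : 'I_d, exists N, forall n, (N <= n)%N -> forall t,
  `|ip (u a) (u a) t - \sum_(j < n) ip (u a) (y j) t * ip (y j) (u a) t| < e / (d%:R + 1).
  by move=> a; apply: fr.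
exists (\max_(a < d) Nf a)%N => n hn.
rewrite (frame_sum_eq _ _ on cp).
have -> : (d%:R : C) = \sum_(a < d) ip (u a) (u a) t.
  rewrite (eq_bigr (fun=> 1)); last by move=> a _; rewrite on // eqxx.
  by rewrite sumr_const card_ord.
rewrite -sumrB; apply: le_lt_trans (ler_norm_sum _ _ _) _.
apply: (le_lt_trans (y := \sum_(a < d) e / (d%:R + 1))).
  apply: ler_sum => a _; apply: ltW; apply: hNf.
  by apply: leq_trans hn; apply: (leq_bigmax a).
have d1 : (0 : C) < d%:R + 1 by rewrite ltr_wpDl.
rewrite sumr_const card_ord -[_ *+ d]mulr_natr -mulrA -[X in _ < X]mulr1 ltr_pM2l //.
by rewrite mulrC ltr_pdivrMr // mul1r ltrDl ltr01.
Qed.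

Lemma RC_nat (k : nat) : ((k%:R : R)%:C)%C = k%:R :> C.
Proof.
elim: k => [|k IH]; first by [].
by rewrite -addn1 !natrD RC_add IH.
Qed.

Lemma ipRe x t : ((complex.Re (ip x x t))%:C)%C = ip x x t /\ 0 <= complex.Re (ip x x t).
Proof. exact: ge0_ReC (ip_ge0 HH x t). Qed.

Lemma frame_convR (y : nat -> H) t d u : std_nt_frame ip y -> ON ip t d u -> complete ip t d u ->
  forall e : R, 0 < e -> exists N, forall n, (N <= n)%N ->
   `|d%:R - \sum_(j < n) complex.Re (ip (y j) (y j) t)| < e.
Proof.
move=> fr on cp e e0.
have e0' : (0 : C) < (e%:C)%C by rewrite RC_lt.
have [N hN] := frame_convC fr on cp e0'.
exists N => n /hN.
have -> : \sum_(j < n) ip (y j) (y j) t = ((\sum_(j < n) complex.Re (ip (y j) (y j) t))%:C)%C.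
  by rewrite RC_sum; apply: eq_bigr => j _; rewrite (ipRe (y j) t).1.
by rewrite -RC_nat RC_sub normCR RC_lt.
Qed.

Lemma frame_leR (y : nat -> H) t d u : std_nt_frame ip y -> ON ip t d u -> complete ip t d u ->
  forall n, \sum_(j < n) complex.Re (ip (y j) (y j) t) <= d%:R.
Proof.
move=> fr on cp; apply: (@mono_leR R (fun j => complex.Re (ip (y j) (y j) t)) d%:R); first by move=> j; exact: (ipRe (y j) t).2.
exact: frame_convR fr on cp.
Qed.

Lemma ker_vec t d u r (e : nat -> H) : ON ip t d u -> (r < d)%N ->
  exists w, perp ip t r e w /\ ip w w t != 0.
Proof.
move=> on rd.
pose M : 'M[C]_(d, r) := \matrix_(a, i) ip (u a) (e i) t.
pose K := kermx M.
have Kn0 : K != 0.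
  rewrite -mxrank_eq0 mxrank_ker subn_eq0 -ltnNge.
  exact: leq_ltn_trans (rank_leq_col M) rd.
have [a0 ha0] : exists a0, row a0 K != 0.
  apply/existsP; apply: contraR Kn0; rewrite negb_exists => /forallP h.
  apply/eqP/matrixP => i j; have := h i; rewrite negbK => /eqP /matrixP /(_ 0 j).
  by rewrite !mxE.
pose c := row a0 K.
have cM : c *m M = 0 by rewrite /c -row_mul mulmx_ker row0.
pose w := \sum_(a < d) sc act (c 0 a) (u a).
exists w; split.
  move=> i hi; rewrite /w (ip_suml HH).
  have := congr1 (fun A : 'rV_r => A 0 (Ordinal hi)) cM; rewrite !mxE => h.
  by rewrite -[RHS]h; apply: eq_bigr => a _; rewrite (ipZl HH) /M !mxE.
rewrite /w (ip_suml HH).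
have -> : \sum_(a < d) ip (sc act (c 0 a) (u a)) (\sum_(a0 < d) sc act (c 0 a0) (u a0)) t
   = \sum_(a < d) `|c 0 a| ^+ 2.
  apply: eq_bigr => a _; rewrite (ipZl HH) (ip_sumr HH).
  rewrite (eq_bigr (fun b : 'I_d => (c 0 b)^* * (b == a)%:R)); last first.
    by move=> b _; rewrite (ipZr HH) on // eq_sym.
  rewrite (bigD1 a) //= eqxx mulr1 big1 ?addr0; last first.
    by move=> b /negbTE ->; rewrite mulr0.
  by rewrite normCK.
have [j0 hj0] : exists j0, c 0 j0 != 0.
  apply/existsP; apply: contraR ha0; rewrite negb_exists => /forallP h.
  apply/eqP/matrixP => i j; rewrite (ord1 i); have := h j; rewrite negbK => /eqP ->.
  by rewrite mxE.
rewrite psumr_eq0; last by move=> a _; rewrite exprn_ge0.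
apply/negP => /allP /(_ j0 (mem_index_enum _)) /=; rewrite sqrf_eq0 normr_eq0.
exact/negP.
Qed.

End Frame.

Section RealAux.
Variable R : realType.

Definition pos (a : R) := (a + `|a|) / 2.
Definition mn (a b : R) := (a + b - `|a - b|) / 2.

Lemma pos_ge0 a : 0 <= pos a.
Proof.
rewrite /pos; have [a0|a0] := leP 0 a.
  by rewrite ger0_norm //; lra.
by rewrite ltr0_norm //; lra.
Qed.

Lemma pos_id a : 0 <= a -> pos a = a.
Proof. by move=> a0; rewrite /pos ger0_norm //; field. Qed.

Lemma pos_gt0 a : 0 < pos a -> 0 < a.
Proof.
rewrite /pos; have [a0|a0] := leP 0 a; last by rewrite ltr0_norm //; lra.
by rewrite ger0_norm //; lra.
Qed.

Lemma pos_le a b : a <= b -> 0 <= b -> pos a <= b.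
Proof.
rewrite /pos; have [a0|a0] := leP 0 a.
  by rewrite ger0_norm //; lra.
by rewrite ltr0_norm //; lra.
Qed.

Lemma mn_le_l a b : mn a b <= a.
Proof.
rewrite /mn; have [h|h] := leP 0 (a - b).
  by rewrite ger0_norm //; lra.
by rewrite ltr0_norm //; lra.
Qed.

Lemma mn_le_r a b : mn a b <= b.
Proof.
rewrite /mn; have [h|h] := leP 0 (a - b).
  by rewrite ger0_norm //; lra.
by rewrite ltr0_norm //; lra.
Qed.

Lemma mn_ge0 a b : 0 <= a -> 0 <= b -> 0 <= mn a b.
Proof.
rewrite /mn; have [h|h] := leP 0 (a - b).
  by rewrite ger0_norm //; lra.
by rewrite ltr0_norm //; lra.
Qed.

Lemma mn_id a : mn a a = a.
Proof. by rewrite /mn subrr normr0 subr0; field. Qed.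

Lemma mn_gt0 a b : 0 < mn a b -> 0 < a /\ 0 < b.
Proof.
move=> h; split; [exact: lt_le_trans h (mn_le_l _ _)|exact: lt_le_trans h (mn_le_r _ _)].
Qed.

Lemma geo_sum k : \sum_(i < k) (4^-1 : R) ^+ i = 4 / 3 * (1 - 4^-1 ^+ k).
Proof.
elim: k => [|k IH]; first by rewrite big_ord0 expr0 subrr mulr0.
by rewrite big_ord_recr /= IH exprSr; field.
Qed.

Lemma geo_le p k : \sum_(i < k) (4^-1 : R) ^+ (p + i) <= 4 / 3 * 4^-1 ^+ p.
Proof.
under eq_bigr => i _ do rewrite exprD.
rewrite -mulr_sumr geo_sum mulrCA ler_pM2l ?exprn_gt0 ?invr_gt0 //.
by rewrite mulrBr mulr1 lerBlDr lerDl mulr_ge0 // exprn_ge0 // invr_ge0.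
by rewrite divr_gt0.
Qed.

Lemma contR_pos (X : topologicalType) (u : X -> R) : contR u -> contR (fun s => pos (u s)).
Proof.
move=> hu; rewrite /pos.
have := contR_scale (2^-1) (contR_D hu (contR_norm hu)).
by congr contR; apply: funext => s; rewrite mulrC.
Qed.

Lemma contR_mn (X : topologicalType) (u v : X -> R) : contR u -> contR v ->
  contR (fun s => mn (u s) (v s)).
Proof.
move=> hu hv; rewrite /mn.
have := contR_scale (2^-1) (contR_B (contR_D hu hv) (contR_norm (contR_B hu hv))).
by congr contR; apply: funext => s; rewrite mulrC.
Qed.

End RealAux.

Section Upper.
Variables (R : realType) (X : topologicalType).
Local Notation C := (R[i]).
Variables (H : zmodType) (act : (X -> C) -> H -> H) (ip : H -> H -> X -> C).
Hypothesis HH : hilbert_CX_module act ip.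
Hypothesis cX : compact [set: X].
Variables (n : nat) (g : 'I_n -> H).
Hypothesis rep : forall x, exists a : 'I_n -> X -> C, (forall i, cont (a i)) /\
      x = \sum_(i < n) act (a i) (g i).
Variables (t0 : X) (r : nat) (e : nat -> H).
Hypotheses (on0 : ON ip t0 r e) (cp0 : complete ip t0 r e).

Definition zz k := g k - proj act ip t0 r e (g k).
Definition rho t := complex.Re (\sum_(k < n) ip (zz k) (zz k) t).

Lemma rho_ge0 t : 0 <= rho t.
Proof. by rewrite /rho Re_sum sumr_ge0 // => k _; exact: (ipRe HH _ _).2. Qed.

Lemma zz_le k t : complex.Re (ip (zz k) (zz k) t) <= rho t.
Proof.
rewrite /rho Re_sum (bigD1 k) //= lerDl sumr_ge0 // => j _.
exact: (ipRe HH _ _).2.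
Qed.

Lemma zz_leC k t : ip (zz k) (zz k) t <= ((rho t)%:C)%C.
Proof. by rewrite -(ipRe HH (zz k) t).1 RC_le zz_le. Qed.

Lemma rho_t0 : rho t0 = 0.
Proof.
rewrite /rho big1 // => k _; exact: (resid0 HH (g k) on0 cp0).
Qed.

Lemma rho_cont : contR rho.
Proof.
apply: contCRe; apply: cont_sum => k; exact: (hm_ip_cont HH).
Qed.

Lemma perp_gz t w k : perp ip t r e w -> ip w (g k) t = ip w (zz k) t.
Proof.
move=> p; rewrite /zz (ipBr HH) /proj (ip_sumr HH) big1 ?subr0 // => a _.
by rewrite (ipZr HH) p // mulr0.
Qed.

Lemma span_rho t w : perp ip t r e w -> rho t = 0 -> ip w w t = 0.
Proof.
move=> p r0; apply: (span0 HH rep) => k; rewrite perp_gz //; apply: (ip_eq0r HH).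
have h1 := zz_le k t; have [h2 h3] := ipRe HH (zz k) t.
by rewrite -h2 (_ : complex.Re _ = 0) //; apply/le_anti; rewrite h3 -r0 h1.
Qed.


Section Seq.
Variables (t_ : nat -> X) (w_ : nat -> H).
Hypotheses (rp : forall m, 0 < rho (t_ m)) (r0 : rho (t_ 0) < 1)
  (rdec : forall m, rho (t_ m.+1) < rho (t_ m) / 16)
  (wp : forall m, perp ip (t_ m) r e (w_ m)) (w1 : forall m, ip (w_ m) (w_ m) (t_ m) = 1).

Local Notation rr m := (rho (t_ m)).

Lemma rho_geo m : rr m <= (16^-1 : R) ^+ m.
Proof.
elim: m => [|m IH]; first by rewrite expr0 ltW.
by apply: (le_trans (ltW (rdec m))); rewrite exprSr ler_pM2r ?invr_gt0.
Qed.

Lemma rho_dec m p : (m < p)%N -> rr p < rr m / 16.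
Proof.
elim: p => [//|p IH]; rewrite ltnS leq_eqVlt => /orP [/eqP <-|/IH h]; first exact: rdec.
have := rdec p; have := rp p; lra.
Qed.

Definition cc m : R := 2^-1 ^+ m.
Definition vv m s := complex.Re (ip (w_ m) (w_ m) s).
Definition TT m s := pos (cc m * (1 - (2 / rr m) * `|rho s - rr m|)).
Definition KK m s := pos (cc m * (2 - vv m s)).
Definition phi m s := mn (TT m s) (KK m s).

Lemma cc_gt0 m : 0 < cc m.
Proof. by rewrite exprn_gt0 // invr_gt0. Qed.

Lemma vv_ge0 m s : 0 <= vv m s.
Proof. exact: (ipRe HH _ _).2. Qed.

Lemma vvC m s : ((vv m s)%:C)%C = ip (w_ m) (w_ m) s.
Proof. exact: (ipRe HH _ _).1. Qed.

Lemma phi_ge0 m s : 0 <= phi m s.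
Proof. by apply: mn_ge0; apply: pos_ge0. Qed.

Lemma phi_le m s : phi m s <= cc m.
Proof.
apply: le_trans (mn_le_l _ _) _; apply: pos_le; last exact: ltW (cc_gt0 m).
have c0 := ltW (cc_gt0 m); rewrite -[X in _ <= X]mulr1 ler_wpM2l //.
rewrite lerBlDr lerDl mulr_ge0 //.
by rewrite divr_ge0 // ltW.
Qed.

Lemma phi_tm m : phi m (t_ m) = cc m.
Proof.
have v1 : vv m (t_ m) = 1 by rewrite /vv w1.
rewrite /phi /TT /KK v1 subrr normr0 mulr0 subr0 mulr1.
rewrite (_ : 2 - 1 = 1 :> R); last by ring.
by rewrite mulr1 pos_id ?mn_id // ltW // cc_gt0.
Qed.

Lemma phi_supp m s : 0 < phi m s -> `|rho s - rr m| < rr m / 2 /\ vv m s < 2.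
Proof.
move=> /mn_gt0 [/pos_gt0 h1 /pos_gt0 h2]; split.
  move: h1; rewrite pmulr_rgt0 ?cc_gt0 // subr_gt0 => h.
  have rm := rp m.
  rewrite (_ : `|rho s - rr m| = rr m / 2 * (2 / rr m * `|rho s - rr m|)); last first.
    by field; rewrite gt_eqF.
  rewrite -[X in _ < X]mulr1 ltr_pM2l //; by rewrite divr_gt0.
by move: h2; rewrite pmulr_rgt0 ?cc_gt0 // subr_gt0.
Qed.

Lemma phi_disj m p s : m != p -> phi m s * phi p s = 0.
Proof.
wlog mp : m p / (m < p)%N.
  move=> W; rewrite neq_ltn => /orP [h|h]; first by apply: W; rewrite ?ltn_eqF.
  by rewrite mulrC; apply: W; rewrite ?ltn_eqF.
move=> _.
have [h1|h1] := eqVneq (phi m s) 0; first by rewrite h1 mul0r.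
have [h2|h2] := eqVneq (phi p s) 0; first by rewrite h2 mulr0.
exfalso.
have [s1 _] : `|rho s - rr m| < rr m / 2 /\ vv m s < 2.
  by apply: phi_supp; rewrite lt0r h1 phi_ge0.
have [s2 _] : `|rho s - rr p| < rr p / 2 /\ vv p s < 2.
  by apply: phi_supp; rewrite lt0r h2 phi_ge0.
have := rho_dec mp; have := rp p.
move: s1 s2; rewrite !ltr_norml => /andP [a1 a2] /andP [b1 b2].
lra.
Qed.


Lemma phi_cont m : contR (phi m).
Proof.
rewrite /phi; apply: contR_mn; apply: contR_pos.
  apply: contR_scale; apply: contR_B; first exact: contR_cst.
  apply: contR_scale; apply: contR_norm; apply: contR_B; first exact: rho_cont.
  exact: contR_cst.
apply: contR_scale; apply: contR_B; first exact: contR_cst.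
exact: contCRe (hm_ip_cont HH _ _).
Qed.

Lemma cphi m : cont (fun s => ((phi m s)%:C)%C).
Proof. exact: contRC (phi_cont m). Qed.

Definition xx m := act (fun s => ((phi m s)%:C)%C) (w_ m).

Lemma conjR (x : R) : (((x%:C)%C)^*)%R = (x%:C)%C.
Proof. exact: conjc_real. Qed.

Lemma ip_xx m p s : ip (xx m) (xx p) s = ((phi m s * phi p s)%:C)%C * ip (w_ m) (w_ p) s.
Proof. by rewrite (ipAl HH _ _ _ (cphi m)) (ipAr HH _ _ _ (cphi p)) conjR mulrA RC_mul. Qed.

Lemma ip_xw m p s : ip (xx m) (w_ p) s = ((phi m s)%:C)%C * ip (w_ m) (w_ p) s.
Proof. by rewrite (ipAl HH _ _ _ (cphi m)). Qed.

Definition SS q := \sum_(m < q) xx m.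

Lemma SS_split p k : SS (p + k) = SS p + \sum_(i < k) xx (p + i).
Proof.
elim: k => [|k IH]; first by rewrite addn0 big_ord0 addr0.
rewrite addnS {1}/SS big_ord_recr /=.
by rewrite -[\sum_(i < p + k) xx i]/(SS (p + k)) IH big_ord_recr /= addrA.
Qed.

Lemma ip_seg p k s : ip (\sum_(i < k) xx (p + i)) (\sum_(i < k) xx (p + i)) s =
  ((\sum_(i < k) phi (p + i) s ^+ 2 * vv (p + i) s)%:C)%C.
Proof.
rewrite (ip_suml HH) RC_sum; apply: eq_bigr => i _.
rewrite (ip_sumr HH) (bigD1 i) //= big1 ?addr0.
  by rewrite ip_xx -vvC -RC_mul expr2.
move=> j ji; rewrite ip_xx phi_disj ?mul0r //.
rewrite eqn_add2l; apply: contra ji => /eqP h; apply/eqP/ord_inj.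
by rewrite h.
Qed.

Lemma cc2 m : cc m ^+ 2 = (4^-1 : R) ^+ m.
Proof.
rewrite /cc -exprM mulnC exprM; congr (_ ^+ _).
by rewrite expr2 -invfM; congr (_^-1); rewrite -natrM.
Qed.

Lemma phi_sq m s : phi m s ^+ 2 * vv m s <= 2 * (4^-1 : R) ^+ m.
Proof.
have [h|h] := eqVneq (phi m s) 0; first by rewrite h expr0n /= mul0r mulr_ge0 // exprn_ge0 // invr_ge0.
have [_ v2] : `|rho s - rho (t_ m)| < rho (t_ m) / 2 /\ vv m s < 2.
  by apply: phi_supp; rewrite lt0r h phi_ge0.
rewrite -cc2 mulrC; apply: ler_pM.
- exact: vv_ge0.
- exact: exprn_ge0 (phi_ge0 _ _).
- exact: ltW.
have c0 := ltW (cc_gt0 m); rewrite ler_pXn2r ?nnegrE ?phi_ge0 //.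
exact: phi_le.
Qed.

Lemma seg_ge0 p k s : 0 <= \sum_(i < k) phi (p + i) s ^+ 2 * vv (p + i) s.
Proof. by apply: sumr_ge0 => i _; rewrite mulr_ge0 ?vv_ge0 // exprn_ge0 // phi_ge0. Qed.

Lemma seg_bound p k s : \sum_(i < k) phi (p + i) s ^+ 2 * vv (p + i) s <= 3 * (4^-1 : R) ^+ p.
Proof.
apply: (@le_trans _ _ (\sum_(i < k) 2 * (4^-1 : R) ^+ (p + i))).
  by apply: ler_sum => i _; exact: phi_sq.
rewrite -mulr_sumr.
have h := @geo_le R p k.
have h0 : 0 <= (4^-1 : R) ^+ p by rewrite exprn_ge0 // invr_ge0.
lra.
Qed.

Lemma ipNN x s : ip (- x) (- x) s = ip x x s.
Proof. by rewrite (ipNl HH) (ipNr HH) opprK. Qed.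

Lemma cauchy : forall eps : C, 0 < eps -> exists N, forall m q, (N <= m)%N -> (N <= q)%N ->
  forall s, `|ip (SS m - SS q) (SS m - SS q) s| < eps.
Proof.
move=> eps /gt0_ReC [ee E0]; set E := complex.Re eps in ee E0.
have E3 : 0 <= 3 / E by rewrite divr_ge0 // ltW.
pose N := Num.Def.archi_bound (3 / E).
have hN : 3 / E < N%:R := archi_boundP E3.
have hN4 : 3 * (4^-1 : R) ^+ N < E.
  have h1 : (N < 4 ^ N)%N by apply: ltn_expl.
  have h2 : (N%:R : R) < 4 ^+ N by rewrite -natrX ltr_nat.
  have h3 : 3 / E < 4 ^+ N := lt_trans hN h2.
  rewrite ltr_pdivrMr // in h3.
  by rewrite exprVn ltr_pdivrMr ?exprn_gt0 // mulrC.
have key : forall q k, (N <= q)%N -> forall s, `|ip (SS (q + k) - SS q) (SS (q + k) - SS q) s| < eps.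
  move=> q k Nq s; rewrite SS_split addrAC subrr add0r ip_seg normCR -ee RC_lt.
  rewrite ger0_norm ?seg_ge0 //; apply: le_lt_trans (seg_bound q k s) _.
  apply: le_lt_trans hN4; rewrite ler_wpM2l // ler_wiXn2l // ?invr_ge0 //.
  by rewrite invf_le1 // ler1n.
exists N => m q hm hq s.
have [qm|mq] := leqP q m.
  by rewrite -(subnKC qm); apply: key.
rewrite -(subnKC (ltnW mq)) -opprB ipNN; apply: key => //.
Qed.

Lemma gk_bound k m : `|ip (g k) (w_ m) (t_ m)| <= (((4^-1 : R) ^+ m)%:C)%C.
Proof.
have -> : ip (g k) (w_ m) (t_ m) = ip (zz k) (w_ m) (t_ m).
  by rewrite (ip_sym HH) perp_gz // -(ip_sym HH).
have cs := CS HH (zz k) (w_ m) (t_ m).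
rewrite w1 mulr1 in cs.
have cs2 := le_trans cs (zz_leC k (t_ m)).
have [eb b0] := ge0_ReC (normr_ge0 (ip (zz k) (w_ m) (t_ m))).
rewrite -eb RC_le; rewrite -eb expr2 -RC_mul RC_le -expr2 in cs2.
have cs3 := le_trans cs2 (rho_geo m).
rewrite -(ler_pXn2r (n := 2)) ?nnegrE ?exprn_ge0 ?invr_ge0 //.
have e16 : (4^-1 : R) ^+ 2 = 16^-1 by rewrite expr2; field.
by rewrite -exprM mulnC exprM e16.
Qed.

Lemma SS_w m q : (m < q)%N -> ip (SS q) (w_ m) (t_ m) = ((cc m)%:C)%C.
Proof.
move=> hq; rewrite /SS (ip_suml HH) (bigD1 (Ordinal hq)) //= ip_xw w1 mulr1 phi_tm.
rewrite big1 ?addr0 // => j jn.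
have jm : (j : nat) != m by apply: contra jn => /eqP h; apply/eqP/val_inj.
have := phi_disj (t_ m) jm; rewrite phi_tm => /eqP; rewrite mulf_eq0 (gt_eqF (cc_gt0 m)) orbF.
by move=> /eqP pj; rewrite ip_xw pj (_ : ((0:R)%:C)%C = 0) ?mul0r.
Qed.

Lemma seq_false : False.
Proof.
have [l hl] := hm_complete HH cauchy.
have [a [ca el]] := rep l.
have /choice [Bf hB] : forall k : 'I_n, exists B : R, forall t, `|a k t| <= (B%:C)%C.
  by move=> k; exact: (@bounded_cont R X cX _ (ca k)).
pose B := \sum_(k < n) Bf k.
have est1 : forall m, `|ip l (w_ m) (t_ m)| <= ((B * (4^-1 : R) ^+ m)%:C)%C.
  move=> m; rewrite el (ip_suml HH); apply: le_trans (ler_norm_sum _ _ _) _.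
  rewrite /B mulr_suml RC_sum; apply: ler_sum => k _.
  rewrite (ipAl HH _ _ _ (ca k)) normrM RC_mul; apply: ler_pM => //.
  exact: gk_bound.
have est2 : forall m, ip l (w_ m) (t_ m) = ((cc m)%:C)%C.
  move=> m; apply/eqP; rewrite -subr_eq0; apply/negP => /negP dn.
  have ep : 0 < `|ip l (w_ m) (t_ m) - ((cc m)%:C)%C| ^+ 2.
    by rewrite exprn_gt0 // normr_gt0.
  have [N hN] := hl _ ep.
  have h2 := hN (maxn N m.+1) (leq_maxl _ _) (t_ m).
  set q := maxn N m.+1 in h2.
  have e1 : ip l (w_ m) (t_ m) - ((cc m)%:C)%C = - ip (SS q - l) (w_ m) (t_ m).
    by rewrite (ipBl HH) (SS_w (leq_maxr N m.+1)) opprB.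
  rewrite e1 normrN in h2.
  have h1 := CS HH (SS q - l) (w_ m) (t_ m); rewrite w1 mulr1 in h1.
  have hr : ip (SS q - l) (SS q - l) (t_ m) \is Num.real by rewrite ger0_real // (ip_ge0 HH).
  have := le_lt_trans h1 (le_lt_trans (real_ler_norm hr) h2).
  by rewrite ltxx.
pose M := Num.Def.archi_bound B.
have B0 : 0 <= B.
  rewrite /B sumr_ge0 // => k _; have := hB k t0; rewrite -RC_le.
  by move/(le_trans (normr_ge0 _)).
have hM : B < M%:R := archi_boundP B0.
have hM2 : (M%:R : R) < 2 ^+ M by rewrite -natrX ltr_nat ltn_expl.
have c0 := ltW (cc_gt0 M).
have := est1 M; rewrite est2 normCR ger0_norm // RC_le /cc.
have -> : (2^-1 : R) = 4^-1 * 2 by field.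
rewrite exprMn mulrC ler_pM2r ?exprn_gt0 ?invr_gt0 // => h.
have := lt_trans hM hM2; by rewrite ltNge h.
Qed.

End Seq.

Lemma upper : exists eps : R, 0 < eps /\ forall t w, rho t < eps -> perp ip t r e w -> ip w w t = 0.
Proof.
apply: contrapT => nok.
have bad : forall eps : R, 0 < eps -> exists t w,
    0 < rho t /\ rho t < eps /\ perp ip t r e w /\ ip w w t = 1.
  move=> eps e0; apply: contrapT => nb; apply: nok; exists eps; split => // t w rt pw.
  apply: contrapT => hn; apply: nb.
  pose v := ip w w t.
  have v0 : 0 < v by rewrite lt0r (ip_ge0 HH) andbT; apply/eqP.
  pose s := (sqrtC v)^-1.
  have sq0 : 0 < sqrtC v by rewrite sqrtC_gt0.
  have sR : s^* = s by apply: geC0_conj; rewrite invr_ge0 ltW.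
  exists t, (sc act s w); split; last split => //; last split.
  - rewrite lt0r rho_ge0 andbT; apply/eqP => r0'; apply: hn.
    exact: span_rho pw r0'.
  - by move=> a ha; rewrite (ipZl HH) pw // mulr0.
  - rewrite (ipZl HH) (ipZr HH) sR -/v mulrA -expr2 exprVn sqrtCK mulVf //.
    by rewrite (gt_eqF v0).
have /choice [pk hpk] : forall eps : R, exists p : X * H, 0 < eps ->
    (0 < rho p.1 /\ rho p.1 < eps /\ perp ip p.1 r e p.2 /\ ip p.2 p.2 p.1 = 1).
  move=> eps; case: (pselect (0 < eps)) => [/bad [t [w h]]|ne].
    by exists (t, w).
  by exists (t0, 0) => /ne.
pose tw := fix tw m := if m is m'.+1 then pk (rho (tw m').1 / 16) else pk 1.
have G : forall m, 0 < rho (tw m).1 /\ rho (tw m.+1).1 < rho (tw m).1 / 16 /\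
    perp ip (tw m).1 r e (tw m).2 /\ ip (tw m).2 (tw m).2 (tw m).1 = 1.
  have G0 : forall m, 0 < rho (tw m).1.
    elim => [|m IH]; first by have [] := hpk 1 ltr01.
    by have [] := hpk (rho (tw m).1 / 16) (divr_gt0 IH (ltr0Sn _ 15)).
  move=> m; split; first exact: G0.
  have [_ [h1 _]] := hpk (rho (tw m).1 / 16) (divr_gt0 (G0 m) (ltr0Sn _ 15)).
  split; first exact: h1. clear h1.
  case: m => [|m]; first by have [_ [_ h]] := hpk 1 ltr01.
  by have [_ [_ h]] := hpk (rho (tw m).1 / 16) (divr_gt0 (G0 m) (ltr0Sn _ 15)).
apply: (@seq_false (fun m => (tw m).1) (fun m => (tw m).2)).
- by move=> m; have [] := G m.
- by have [_ [h _]] := hpk 1 ltr01.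
- by move=> m; have [_ []] := G m.
- by move=> m; have [_ [_ []]] := G m.
- by move=> m; have [_ [_ []]] := G m.
Qed.

Lemma dim_upper : exists eps : R, 0 < eps /\
  forall t d u, rho t < eps -> ON ip t d u -> (d <= r)%N.
Proof.
have [eps [e0 h]] := upper; exists eps; split => // t d u rt on.
rewrite leqNgt; apply/negP => rd.
have [w [pw nw]] := ker_vec HH e on rd.
by move/eqP: nw; apply; apply: h.
Qed.

End Upper.

Unset Implicit Arguments. Set Strict Implicit.


Theorem proposition4p7 (R : realType) (X : topologicalType)
    (X_compact : compact [set: X]) (X_hausdorff : hausdorff_space X)
    (H : zmodType) (act : (X -> R[i]) -> H -> H) (ip : H -> H -> X -> R[i])
    (HH : hilbert_CX_module act ip) (Hfg : fin_generated act) :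
  exists f : X -> R[i],
    [/\ cont f,
        (forall t, exists n : nat, f t = n%:R),
        (forall n : nat, open [set t | f t = n%:R] /\ closed [set t | f t = n%:R])
      & forall y : nat -> H, std_nt_frame ip y ->
          weak_sum_to (fun j => ip (y j) (y j)) f].
Proof.
have [n [g rep]] := Hfg.
case: (pselect (exists y, std_nt_frame ip y)) => [[y0 fr0]|nofr]; last first.
  exists (fun _ => 0); split.
  - exact: cont_cst.
  - by move=> t; exists 0%N.
  - by move=> k; split; [apply: lc_open | apply: lc_closed] => x; apply: nearW.
  - by move=> y fr; exfalso; apply: nofr; exists y.
have /choice [Bf hBf] : forall t, exists du : nat * (nat -> H),
    ON ip t du.1 du.2 /\ complete ip t du.1 du.2 := fun t => basis HH rep t.
pose D t := (Bf t).1.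
pose sR (y : nat -> H) (N : nat) (t : X) := \sum_(j < N) complex.Re (ip (y j) (y j) t).
have sR_cont : forall y N, contR (sR y N).
  move=> y N; rewrite /sR.
  have hc : cont (fun t => \sum_(j < N) ip (y j) (y j) t).
    by apply: cont_sum => j; exact: (hm_ip_cont HH).
  have := contCRe hc.
  by congr contR; apply: funext => t; rewrite Re_sum.
have h2 : (0 : R) < 1 / 2 by rewrite divr_gt0.
have lc : forall x, \forall t \near x, D t = D x.
  move=> x; have [on0 cp0] := hBf x.
  have [eps [e0 hup]] := dim_upper HH X_compact rep x (D x) (Bf x).2.
  have [N hN] := frame_convR HH fr0 on0 cp0 h2.
  have hx := hN N (leqnn N).
  have n1 := rho_cont HH g x (D x) (Bf x).2 x e0.
  have n2 := sR_cont y0 N x _ h2.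
  apply: filterS2 n1 n2 => t h1 h3.
  have [ont cpt] := hBf t.
  apply/eqP; rewrite eqn_leq; apply/andP; split.
    apply: (hup t _ (Bf t).2 _ ont).
    rewrite (rho_t0 HH g on0 cp0) subr0 ger0_norm ?rho_ge0 // in h1.
  have := frame_leR HH fr0 ont cpt N.
  rewrite -/(sR y0 N t) -/(D t) => h4.
  rewrite -/(sR y0 N x) in hx.
  move: hx h3; rewrite !ltr_norml => /andP [a1 a2] /andP [a3 a4].
  have : ((D x)%:R : R) < (D t).+1%:R.
    rewrite -addn1 natrD; lra.
  by rewrite ltr_nat ltnS.
have lcC : forall x, \forall t \near x, ((D t)%:R : R[i]) = (D x)%:R.
  by move=> x; apply: filterS (lc x) => t ->.
exists (fun t => (D t)%:R); split.
- exact: lc_cont lcC.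
- by move=> t; exists (D t).
- by move=> k; split; [apply: lc_open | apply: lc_closed].
move=> y fr phi [phil [K hK]] eps eps0.
have [Ee E0] := gt0_ReC eps0; set E := complex.Re eps in Ee E0.
have [eK K0] := ge0_ReC (normr_ge0 K); set k := complex.Re `|K| in eK K0.
pose dl := E / (k + 1).
have dl0 : 0 < dl by rewrite divr_gt0 // ltr_wpDl.
have contRf : contR (fun t => ((D t)%:R : R)).
  by move=> x e0 he0; apply: filterS (lc x) => t ->; rewrite subrr normr0.
have mono : forall n m t, (n <= m)%N -> sR y n t <= sR y m t.
  move=> n1 m1 t h; rewrite /sR; apply: (@sum_mono R (fun j => complex.Re (ip (y j) (y j) t))) => //.
  by move=> j; exact: (ipRe HH (y j) t).2.
have le : forall n t, sR y n t <= (D t)%:R.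
  by move=> n1 t; have [o c] := hBf t; rewrite /sR /D; move: (frame_leR HH fr o c n1).
have lim : forall t e, 0 < e -> exists N, (D t)%:R - sR y N t < e.
  move=> t e he; have [o c] := hBf t; have [N hN] := frame_convR HH fr o c he.
  by exists N; apply: le_lt_trans (hN N (leqnn N)); exact: ler_norm.
have [N hN] := dini X_compact (sR_cont y) contRf mono le lim dl0.
exists N => m hm.
pose F := fun t => ((D t)%:R : R[i]).
pose G := fun t => \sum_(j < m) ip (y j) (y j) t.
have cF : cont F by exact: lc_cont lcC.
have cG : cont G by apply: cont_sum => j; exact: (hm_ip_cont HH).
have cNF : cont (fun t => -1 * F t).
  by apply: lc_cont => x; apply: filterS (lcC x) => t; rewrite /F => ->.
have ch : cont (fun t => -1 * F t + G t) by exact: cont_D.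
have lin := phil (-1) F G cF cG.
have -> : phi G - phi F = phi (fun t => -1 * F t + G t) by rewrite lin; ring.
have bnd : forall t, `|-1 * F t + G t| <= ((dl)%:C)%C.
  move=> t.
  have -> : G t = ((sR y m t)%:C)%C.
    by rewrite /G /sR RC_sum; apply: eq_bigr => j _; rewrite (ipRe HH (y j) t).1.
  rewrite /F -RC_nat mulN1r addrC RC_sub normCR RC_le distrC; exact: ltW (hN m hm t).
have hb := hK _ ch _ bnd.
have kd0 : 0 <= K * ((dl)%:C)%C := le_trans (normr_ge0 _) hb.
rewrite -(ger0_norm kd0) normrM -eK normCR (ger0_norm (ltW dl0)) -RC_mul in hb.
apply: le_lt_trans hb _; rewrite -Ee RC_lt /dl.
have k1 : 0 < k + 1 by rewrite ltr_wpDl.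
rewrite mulrA ltr_pdivrMr // mulrDr mulr1 mulrC ltrDl //.
Qed.
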